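(* Let $s\ge 1$ and $d\ge 1$ be integers. A partition $\lambda$ is an $(s,s+1)$-core partition with $d$-distinct parts if and only if $\beta(\lambda)$ is a $d$-th order twin-free subset of $\{1,2,\ldots,s-1\}$.
   Context: A partition $\lambda=(\lambda_1,\ldots,\lambda_l)$ is a finite nonincreasing sequence of positive integers (the empty partition is allowed). $\lambda$ is a partition with $d$-distinct parts if $\lambda_i-\lambda_{i+1}\ge d$ for all $1\le i\le l-1$. In the Young diagram of $\lambda$, the hook length $h(i,j)$ of box $(i,j)$ is the number of boxes directly to its right, plus the number directly below it, plus one. $\lambda$ is an $(s_1,\ldots,s_t)$-core partition if no box has hook length equal to any of $s_1,\ldots,s_t$. The set $\beta(\lambda)=\{h(i,1):1\le i\le l\}$ is the set of first-column hook lengths. A set $X\subseteq\mathbb{N}$ is a $d$-th order twin-free set if there is no $x\in X$ and $k$ with $1\le k\le d$ such that $\{x,x+k\}\subseteq X$. *)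

(* Defs.v *)
From mathcomp Require Import all_boot.
Set Implicit Arguments. Unset Strict Implicit. Unset Printing Implicit Defensive.

Definition is_partition (la : seq nat) : bool :=
  sorted geq la && all (fun x => 0 < x) la.

Definition d_distinct (d : nat) (la : seq nat) : bool :=
  [forall i : 'I_(size la).-1,
     d + nth 0 la i.+1 <= nth 0 la i].

(* Hook length of box (i,j) (0-indexed: row i < size la, column j < la_i):
   arm = number of boxes to the right = la_i - j - 1,
   leg = number of boxes below = #{k > i : la_k > j},
   hook = arm + leg + 1. *)
Definition hook (la : seq nat) (i j : nat) : nat :=
  (nth 0 la i - j.+1) + count (fun x => j < x) (drop i.+1 la) + 1.

Definition in_diagram (la : seq nat) (i j : nat) : bool :=
  (i < size la) && (j < nth 0 la i).

Definition is_core (ss : seq nat) (la : seq nat) : bool :=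
  [forall i : 'I_(size la), forall j : 'I_(nth 0 la i),
     hook la i j \notin ss].

Definition beta (la : seq nat) : seq nat :=
  [seq hook la i 0 | i <- iota 0 (size la)].

Definition twin_free (d : nat) (X : seq nat) : Prop :=
  ~ (exists x k, [/\ x \in X, 1 <= k <= d & x + k \in X]).

(* Main.v *)
Require Import Defs.
From mathcomp Require Import all_boot.
From mathcomp Require Import zify.
Set Implicit Arguments. Unset Strict Implicit.

Lemma part_nth_le la i j : is_partition la -> i <= j -> j < size la ->
  nth 0 la j <= nth 0 la i.
Proof.
case/andP=> hs _ hij hj.
have tr : transitive geq by move=> a b c /= h1 h2; exact: leq_trans h2 h1.
apply: (@sorted_leq_nth nat geq tr (fun a => leqnn a) 0 la hs i j) => //.
rewrite inE; exact: leq_ltn_trans hij hj.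
Qed.

Lemma part_pos la i : is_partition la -> i < size la -> 0 < nth 0 la i.
Proof. case/andP=> _ /allP ha hi; apply: ha; exact: mem_nth. Qed.

Lemma hook_i0 la i : is_partition la -> i < size la ->
  hook la i 0 = nth 0 la i + (size la - i.+1).
Proof.
move=> hp hi; have := part_pos hp hi; rewrite /hook.
have -> : count (fun x => 0 < x) (drop i.+1 la) = size (drop i.+1 la).
  apply/eqP; rewrite -all_count; apply/allP => x /mem_drop.
  by case/andP: hp => _ /allP; apply.
rewrite size_drop; lia.
Qed.

Lemma hook_bound la i j : is_partition la -> i < size la ->
  hook la i j <= nth 0 la 0 + (size la).-1.
Proof.
move=> hp hi; have := part_nth_le hp (leq0n i) hi.
have := part_pos hp hi.
have := count_size (fun x => j < x) (drop i.+1 la).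
rewrite /hook size_drop; lia.
Qed.

Lemma mem_beta la x : reflect (exists2 i, i < size la & x = hook la i 0) (x \in beta la).
Proof.
apply: (iffP mapP) => [[i]|[i hi ->]]; last by exists i => //; rewrite mem_iota.
by rewrite mem_iota => /andP [_ hi] ->; exists i.
Qed.

Lemma count_step j (t : seq nat) :
  count (fun x => j < x) t <= count (fun x => j.+1 < x) t + count_mem j.+1 t.
Proof.
elim: t => //= a t IH.
case: (ltngtP j.+1 a) => h; try lia.
all: have := IH; case: (ltngtP j a); lia.
Qed.


Lemma dd_lt d la i j : is_partition la -> 0 < d -> d_distinct d la ->
  i < j -> j < size la -> nth 0 la j < nth 0 la i.
Proof.
move=> hp hd /forallP dd hij hj.
have hi' : i < (size la).-1 by lia.
have := dd (Ordinal hi'); rewrite /=.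
have := part_nth_le hp (hij : i.+1 <= j) hj. lia.
Qed.

Lemma dd_uniq d la : is_partition la -> 0 < d -> d_distinct d la -> uniq la.
Proof.
move=> hp hd dd.
apply: (@sorted_uniq _ (fun a b => b < a)).
- move=> a b c /= h1 h2; exact: ltn_trans h2 h1.
- move=> a /=; exact: ltnn.
apply/(sortedP 0) => i hi; exact: (dd_lt hp hd dd).
Qed.

Lemma beta_sub s la : is_partition la -> (0 < size la -> hook la 0 0 < s) ->
  {subset beta la <= iota 1 s.-1}.
Proof.
move=> hp hs x /mem_beta [i hi ->].
have h0 : 0 < size la by lia.
have := hs h0; rewrite hook_i0 // => hs'.
have := hook_bound 0 hp hi.
rewrite mem_iota /hook; lia.
Qed.

Lemma core_forward s d la : 1 <= s -> 1 <= d -> is_partition la ->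
  is_core [:: s; s.+1] la -> d_distinct d la -> 0 < size la -> hook la 0 0 < s.
Proof.
move=> hs hd hp /forallP hc dd hl.
set a := nth 0 la 0.
have ha : 0 < a by exact: part_pos hp hl.
have hu := drop_uniq 1 (dd_uniq hp hd dd).
have fstep : forall j, j.+1 < a -> hook la 0 j <= hook la 0 j.+1 + 2.
  move=> j hj; rewrite /hook -/a.
  have := count_step j (drop 1 la).
  rewrite (count_uniq_mem _ hu).
  have := leq_b1 (j.+1 \in drop 1 la). lia.
have flast : hook la 0 a.-1 = 1.
  rewrite /hook -/a.
  have -> : count (fun x => a.-1 < x) (drop 1 la) = 0.
    apply/eqP; rewrite -leqn0 leqNgt -has_count; apply/hasPn => x.
    case/(nthP 0) => k; rewrite size_drop nth_drop => hk <-.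
    have hk' : k.+1 < size la by move: hk; case: (size la) => // n; rewrite subn1 /=; lia.
    have := dd_lt hp hd dd (ltn0Sn k) hk'.
    rewrite -/a add1n -leqNgt; move: ha; clearbody a; clear; by case: a.
  lia.
have key : forall m n, n + m = a.-1 -> s <= hook la 0 n ->
    exists2 j, j < a & (hook la 0 j == s) || (hook la 0 j == s.+1).
  elim=> [|m IH] n hn hsn.
    exists n; first lia.
    move: hsn; rewrite addn0 in hn; rewrite hn flast; lia.
  case: (leqP s (hook la 0 n.+1)) => h.
    apply: (IH n.+1) => //; lia.
  exists n; first lia.
  have := fstep n (_ : n.+1 < a). lia.
rewrite ltnNge; apply/negP => hs0.
have [j hj hjs] := key a.-1 0 (add0n _) hs0.
have := hc (Ordinal hl) => /forallP /= hc'.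
have := hc' (Ordinal hj).
by rewrite !inE /= hjs.
Qed.


Lemma dd_twin d la : is_partition la -> d_distinct d la -> twin_free d (beta la).
Proof.
move=> hp /forallP dd [x [k [/mem_beta [i hi ->] /andP [hk1 hkd] /mem_beta [j hj hij]]]].
move: hij; rewrite !hook_i0 // => hij.
case: (ltnP j i) => hji.
  have hj' : j < (size la).-1 by lia.
  have := dd (Ordinal hj'); rewrite /=.
  have := part_nth_le hp (hji : j.+1 <= i) hi. lia.
have := part_nth_le hp hji hj. lia.
Qed.

Lemma twin_dd d la : is_partition la -> twin_free d (beta la) -> d_distinct d la.
Proof.
move=> hp tf; apply/forallP => -[i hi] /=.
rewrite leqNgt; apply/negP => hlt; apply: tf.
have hi1 : i.+1 < size la by lia.
have hi0 : i < size la by lia.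
have hle := part_nth_le hp (leqnSn i) hi1.
exists (hook la i.+1 0), (nth 0 la i - nth 0 la i.+1).+1.
split; first by apply/mem_beta; exists i.+1.
  by apply/andP; split; lia.
apply/mem_beta; exists i => //.
rewrite !hook_i0 //; lia.
Qed.

Lemma core_back s la : is_partition la -> (0 < size la -> hook la 0 0 < s) ->
  is_core [:: s; s.+1] la.
Proof.
move=> hp hs; apply/forallP => -[i hi]; apply/forallP => j /=.
have h0 : 0 < size la by lia.
have := hs h0; rewrite hook_i0 // => hs'.
have := hook_bound j hp hi.
move: hs'; rewrite -subn1; move: (hook la i j) => h; move: (nth 0 la 0) => a; clear => hs' hb; apply/negP; rewrite !inE => /orP [] /eqP; lia.
Qed.

Theorem mainTheorem3 (s d : nat) (hs : 1 <= s) (hd : 1 <= d) (la : seq nat) :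
  is_partition la ->
  (is_core [:: s; s.+1] la /\ d_distinct d la <->
   {subset beta la <= iota 1 s.-1} /\ twin_free d (beta la)).
Proof.
move=> hp; split.
  case=> hc dd; split; last exact: dd_twin.
  apply: beta_sub => //; exact: (core_forward hs hd hp hc dd).
case=> hsub tf.
have h0 : 0 < size la -> hook la 0 0 < s.
  move=> hl; have : hook la 0 0 \in beta la by apply/mem_beta; exists 0.
  move/hsub; rewrite mem_iota; lia.
split; [exact: core_back | exact: twin_dd].
Qed.
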